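(* Let $L=\{a^nb^m : n,m\in\mathbb{N},\ m\le n\}$ over the alphabet $\{a,b\}$. Then $L\in\mathrm{RN}_1$ and $L\notin\mathrm{RH}$, i.e. $L$ is recognised by some (nondeterministic) $1$-VASS under reachability acceptance but by no history-deterministic $k$-VASS (for any $k$) under reachability acceptance.
   Context: Fix a finite alphabet $\Sigma$. A $k$-dimensional vector addition system with states ($k$-VASS) is a tuple $(Q,q_0,F,\delta)$ where $Q$ is a finite set of states, $q_0\in Q$ is initial, $F\subseteq Q$ is the set of accepting states, and $\delta\subseteq Q\times\Sigma\times\mathbb{Z}^k\times Q$ is a finite set of transitions (no $\varepsilon$-transitions). A run on a word $w=a_1\cdots a_n$ is a sequence of transitions $(p_{i-1},a_i,d_i,p_i)$ with $p_0=q_0$ such that the counter vectors $v_0=\vec 0$, $v_i=v_{i-1}+d_i$ all lie in $\mathbb{N}^k$. Under reachability acceptance the run is accepting if $p_n\in F$ and $v_n=\vec 0$. The language is the set of words having an accepting run. A VASS is history-deterministic if there is a resolver, i.e. a function $r$ mapping each finite sequence of transitions and each letter $a$ to a transition labelled $a$, such that for every word $w$ in the language, the sequence of transitions obtained by successively applying $r$ to the letters of $w$ is a run on $w$ (counters stay nonnegative) and is accepting. $\mathrm{RN}_k$ (resp. $\mathrm{RH}_k$) is the class of languages recognised by arbitrary (resp. history-deterministic) $k$-VASS under reachability acceptance, and $\mathrm{RH}=\bigcup_{k\ge1}\mathrm{RH}_k$. *)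

(* Defs.v *)
From HB Require Import structures.
From mathcomp Require Import all_boot all_order all_algebra.
Set Implicit Arguments. Unset Strict Implicit. Unset Printing Implicit Defensive.
Import Order.TTheory GRing.Theory Num.Theory.

Inductive ab := a | b.
Definition ab2bool (x : ab) : bool := if x is a then true else false.
Definition bool2ab (x : bool) : ab := if x then a else b.
Lemma ab2boolK : cancel ab2bool bool2ab. Proof. by case. Qed.
HB.instance Definition _ := Finite.copy ab (can_type ab2boolK).

Section VASS.
Variables (Sigma : finType) (k : nat) (Q : finType).

Definition vec := {ffun 'I_k -> int}.
Definition transition := (Q * Sigma * vec * Q)%type.

(* A k-VASS with state set Q: initial state, accepting states, finite
   set of transitions (no epsilon transitions). *)
Record vass := Vass {
  q0 : Q;
  final : {set Q};
  delta : seq transition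
}.

Definition tsrc (t : transition) : Q := t.1.1.1.
Definition tlab (t : transition) : Sigma := t.1.1.2.
Definition tupd (t : transition) : vec := t.1.2.
Definition ttgt (t : transition) : Q := t.2.

Definition vadd (v d : vec) : vec := [ffun i => (v i + d i)%R].
Definition vzero : vec := [ffun _ => 0%R].

Fixpoint run_end (V : vass) (p : Q) (v : vec) (ts : seq transition)
  (w : seq Sigma) : option (Q * vec) :=
  match ts, w with
  | [::], [::] => Some (p, v)
  | t :: ts', x :: w' =>
      if [&& t \in delta V, tsrc t == p, tlab t == x &
             [forall i, (0 <= vadd v (tupd t) i)%R]]
      then run_end V (ttgt t) (vadd v (tupd t)) ts' w'
      else None
  | _, _ => None
  end.

Definition accepting_run (V : vass) (ts : seq transition) (w : seq Sigma) : Prop :=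
  exists q, run_end V (q0 V) vzero ts w = Some (q, vzero) /\ q \in final V.

Definition accepts (V : vass) (w : seq Sigma) : Prop :=
  exists ts, accepting_run V ts w.

Fixpoint resolve_aux (r : seq transition -> Sigma -> transition)
  (hist : seq transition) (w : seq Sigma) : seq transition :=
  match w with
  | [::] => [::]
  | x :: w' => let t := r hist x in t :: resolve_aux r (rcons hist t) w'
  end.
Definition resolve r w := resolve_aux r [::] w.

Definition is_resolver (V : vass) (r : seq transition -> Sigma -> transition) :=
  forall hist x, r hist x \in delta V /\ tlab (r hist x) = x.

Definition history_deterministic (V : vass) : Prop :=
  exists r, is_resolver V r /\
    forall w, accepts V w -> accepting_run V (resolve r w) w.

End VASS.

Definition L_anbm (w : seq ab) : Prop :=
  exists n m : nat, (m <= n)%N /\ w = nseq n a ++ nseq m b.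

Definition recognises (Sigma : finType) (k : nat) (Q : finType)
  (V : vass Sigma k Q) (Lang : seq Sigma -> Prop) : Prop :=
  forall w, accepts V w <-> Lang w.

Definition in_RN (Sigma : finType) (k : nat) (Lang : seq Sigma -> Prop) : Prop :=
  exists (Q : finType) (V : vass Sigma k Q), recognises V Lang.

Definition in_RH (Sigma : finType) (Lang : seq Sigma -> Prop) : Prop :=
  exists (k : nat), (1 <= k)%N /\
    exists (Q : finType) (V : vass Sigma k Q),
      history_deterministic V /\ recognises V Lang.

(* Main.v *)
Require Import Defs.
From mathcomp Require Import all_boot all_order all_algebra.
From mathcomp Require Import zify.
Import GRing.Theory.

Lemma run_end_size (S : finType) k (Q : finType) (V : vass S k Q) p v ts w r :
  run_end V p v ts w = Some r -> size ts = size w.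
Proof.
elim: ts w p v => [|t ts IH] [|x w] //= p v.
by case: ifP => // _ /IH ->.
Qed.

Lemma run_end_cat (S : finType) k (Q : finType) (V : vass S k Q) p v ts1 ts2 w1 w2 :
  size ts1 = size w1 ->
  run_end V p v (ts1 ++ ts2) (w1 ++ w2) =
  obind (fun r => run_end V r.1 r.2 ts2 w2) (run_end V p v ts1 w1).
Proof.
elim: ts1 w1 p v => [|t ts IH] [|x w] //= p v [Hs].
by case: ifP => // _; apply: IH.
Qed.

Lemma size_resolve_aux (S : finType) k (Q : finType) r hist (w : seq S) :
  size (@resolve_aux S k Q r hist w) = size w.
Proof. by elim: w hist => [|x w IH] hist //=; rewrite IH. Qed.

Lemma resolve_aux_cat (S : finType) k (Q : finType) r hist (w1 w2 : seq S) :
  @resolve_aux S k Q r hist (w1 ++ w2) =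
  resolve_aux r hist w1 ++ resolve_aux r (hist ++ resolve_aux r hist w1) w2.
Proof.
elim: w1 hist => [|x w IH] hist /=; first by rewrite cats0.
by rewrite IH cat_rcons.
Qed.

Lemma resolve_cat (S : finType) k (Q : finType) r (w1 w2 : seq S) :
  @resolve S k Q r (w1 ++ w2) = resolve r w1 ++ resolve_aux r (resolve r w1) w2.
Proof. exact: resolve_aux_cat. Qed.

Lemma L_count n m : L_anbm (nseq n a ++ nseq m b) -> m <= n.
Proof.
case=> n' [m' [le E]].
have := congr1 (count_mem a) E; have := congr1 (count_mem b) E.
rewrite !count_cat !count_nseq /=. lia.
Qed.

Lemma not_RH : ~ in_RH L_anbm.
Proof.
case=> k [_ [Q [V [[r [_ Hr]] Hrec]]]].
set N := #|Q|.
pose P j := nseq N a ++ nseq j b.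
have HP j : j <= N -> accepting_run V (resolve r (P j)) (P j).
  by move=> hj; apply: Hr; apply/Hrec; exists N, j.
pose fs j := if run_end V (q0 V) (vzero k) (resolve r (P j)) (P j) is Some (q,_) then q else q0 V.
have pump i j : i < j <= N -> fs i = fs j -> False.
  case/andP=> lij ljN.
  have [si [Ri _]] := HP i (ltnW (leq_trans lij ljN)).
  have [sj [Rj _]] := HP j ljN.
  have [sN [RN FN]] := HP N (leqnn N).
  rewrite /fs Ri Rj => esij; subst sj.
  have EPj : P j = P i ++ nseq (j-i) b by rewrite /P -catA -nseqD subnKC // ltnW.
  have EPN : P N = P j ++ nseq (N-j) b by rewrite /P -catA -nseqD subnKC.
  set mid := resolve_aux r (resolve r (P i)) (nseq (j-i) b).
  set rest := resolve_aux r (resolve r (P j)) (nseq (N-j) b).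
  have Si : size (resolve r (P i)) = size (P i) by rewrite size_resolve_aux.
  have Sm : size mid = size (nseq (j-i) b) by rewrite size_resolve_aux.
  have Hmid : run_end V si (vzero k) mid (nseq (j-i) b) = Some (si, (vzero k)).
    by move: Rj; rewrite {1 2}EPj resolve_cat run_end_cat // Ri.
  have Hrest : run_end V si (vzero k) rest (nseq (N-j) b) = Some (sN, (vzero k)).
    have Sj : size (resolve r (P j)) = size (P j) by rewrite size_resolve_aux.
    by move: RN; rewrite {1 2}EPN resolve_cat run_end_cat // Rj.
  have : accepts V (P i ++ nseq (j-i) b ++ nseq (j-i) b ++ nseq (N-j) b).
    exists (resolve r (P i) ++ mid ++ mid ++ rest), sN; split => //.
    by rewrite run_end_cat // Ri /= run_end_cat // Hmid /= run_end_cat // Hmid.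
  move/Hrec; rewrite /P -catA -!nseqD => /L_count. lia.
pose f (j : 'I_N.+1) := fs j.
have : ~~ injectiveb f.
  apply/negP => /injectiveP/leq_card; rewrite card_ord. rewrite /N. lia.
case/injectivePn => i [j nij]; rewrite /f.
case: (ltngtP i j) => [lij|lji|eij] E.
- by apply: (pump i j) => //; rewrite lij -ltnS ltn_ord.
- by apply: (pump j i) => //; rewrite lji -ltnS ltn_ord.
- by move: nij; rewrite (val_inj eij) eqxx.
Qed.

Definition cst (c : int) : vec 1 := [ffun _ => c].
Definition tA1 : transition ab 1 bool := (true, a, cst 1, true).
Definition tA0 : transition ab 1 bool := (true, a, cst 0, true).
Definition tBp : transition ab 1 bool := (true, b, cst (-1), false).
Definition tBq : transition ab 1 bool := (false, b, cst (-1), false).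
Definition V1 : vass ab 1 bool := Vass true setT [:: tA1; tA0; tBp; tBq].

Lemma vadd0 (v d : vec 1) : vadd v d ord0 = (v ord0 + d ord0)%R.
Proof. by rewrite ffunE. Qed.

Lemma vec1E (v : vec 1) : v = cst (v ord0).
Proof. by apply/ffunP => i; rewrite ffunE (ord1 i). Qed.

Lemma nonneg1 (v : vec 1) : [forall i, (0 <= v i)%R] = (0 <= v ord0)%R.
Proof.
apply/forallP/idP => [|H i]; first by apply.
by rewrite (ord1 i).
Qed.

Lemma runF ts w (v : vec 1) q u :
  run_end V1 false v ts w = Some (q, u) ->
  w = nseq (size w) b /\ u ord0 = (v ord0 - (size w)%:Z)%R.
Proof.
elim: ts w v => [|t ts IH] [|x w] //= v.
- by case=> _ <-; rewrite subr0.
case: ifP => // /and4P [Hin /eqP Hs /eqP Hl _].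
move: Hin; rewrite !inE => /or4P [] /eqP Et; subst t => //.
move: Hl; rewrite /tlab /= => <- /IH [Ew Eu]; split; first by rewrite -Ew.
rewrite Eu vadd0 /tupd /= ffunE. lia.
Qed.

Lemma runT ts w (v : vec 1) q u :
  run_end V1 true v ts w = Some (q, u) ->
  exists n m, w = nseq n a ++ nseq m b /\ (u ord0 + m%:Z <= v ord0 + n%:Z)%R.
Proof.
elim: ts w v => [|t ts IH] [|x w] //= v.
- by case=> _ <-; exists 0, 0; split => //; rewrite !addr0.
case: ifP => // /and4P [Hin /eqP Hs /eqP Hl _].
move: Hin; rewrite !inE => /or4P [] /eqP Et; subst t => //; move: Hl; rewrite /tlab /= => <-.
- move=> /IH [n [m [Ew Hu]]]; exists n.+1, m; rewrite Ew; split => //.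
  move: Hu; rewrite vadd0 /tupd /= ffunE. lia.
- move=> /IH [n [m [Ew Hu]]]; exists n.+1, m; rewrite Ew; split => //.
  move: Hu; rewrite vadd0 /tupd /= ffunE. lia.
- move=> /runF [Ew Hu]; exists 0, (size w).+1; split; first by rewrite /= -Ew.
  move: Hu; rewrite vadd0 /tupd /= ffunE. lia.
Qed.

Fixpoint bs m : seq (transition ab 1 bool) :=
  if m is m'.+1 then tBp :: nseq m' tBq else [::].

Lemma vaddC (x y : int) : vadd (cst x) (cst y) = cst (x + y)%R.
Proof. by apply/ffunP => i; rewrite !ffunE. Qed.

Lemma run_tA0 j (c : int) : (0 <= c)%R ->
  run_end V1 true (cst c) (nseq j tA0) (nseq j a) = Some (true, cst c).
Proof.
move=> Hc; elim: j => //= j IH.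
rewrite /tupd /= vaddC addr0 IH !inE eqxx /= nonneg1 ffunE Hc /=.
by rewrite orbT.
Qed.

Lemma run_tA1 j (c : int) : (0 <= c)%R ->
  run_end V1 true (cst c) (nseq j tA1) (nseq j a) = Some (true, cst (c + j%:Z)%R).
Proof.
elim: j c => [|j IH] c Hc /=; first by rewrite addr0.
rewrite /tupd /= vaddC IH; last by lia.
rewrite !inE eqxx /= nonneg1 ffunE /=.
have -> : (0 <= c + 1)%R by lia.
have -> : (c + 1 + j%:Z = c + j.+1%:Z)%R by lia.
by [].
Qed.

Lemma run_tBq j (c : int) : (0 <= c)%R ->
  run_end V1 false (cst (c + j%:Z)%R) (nseq j tBq) (nseq j b) = Some (false, cst c).
Proof.
elim: j c => [|j IH] c Hc /=; first by rewrite addr0.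
rewrite /tupd /= vaddC.
rewrite [X in cst X](_ : _ = c + j%:Z)%R; last by lia.
rewrite IH // !inE eqxx !orbT /= nonneg1 ffunE /=.
have -> : (0 <= c + j%:Z)%R by lia.
by [].
Qed.

Lemma run_bs m :
  exists q, run_end V1 true (cst m%:Z) (bs m) (nseq m b) = Some (q, cst 0).
Proof.
case: m => [|m] /=; first by exists true.
exists false; rewrite /tupd /= vaddC.
rewrite [X in cst X](_ : _ = 0 + m%:Z)%R; last by lia.
by rewrite run_tBq // !inE eqxx !orbT /= nonneg1 ffunE /=.
Qed.

Lemma part1 : in_RN 1 L_anbm.
Proof.
exists bool, V1 => w; split.
- case=> ts [q [H _]].
  move: H => /runT [n [m [Ew Hle]]].
  exists n, m; split => //.
  move: Hle; rewrite !ffunE; lia.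
- case=> n [m [Hmn ->]].
  have [q Hq] := run_bs m.
  exists (nseq (n - m) tA0 ++ nseq m tA1 ++ bs m), q; split; last by rewrite inE.
  have -> : nseq n a = nseq (n - m) a ++ nseq m a by rewrite -nseqD subnK.
  rewrite -catA run_end_cat ?size_nseq // (vec1E (vzero 1)) ffunE run_tA0 //=.
  rewrite run_end_cat ?size_nseq // run_tA1 //= add0r Hq; rewrite (vec1E (vzero 1)) ffunE.
Qed.

Theorem mainTheorem5 : in_RN 1 L_anbm /\ ~ in_RH L_anbm.
Proof. split; [exact: part1 | exact: not_RH]. Qed.
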